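(* Let $(\sigma_k)_{k>0}$ be real numbers with $\sigma_k/\ln(k)\to\infty$ as $k\to\infty$, and let $\gamma>0$. Then $$\lim_{k\to\infty}k\int_{\sigma_k}^\infty\exp\Bigl(-2m\Bigl(\gamma-\sqrt{\tfrac{\ln(k)}{m}}\Bigr)^2\Bigr)\,\mathrm dm=0.$$ *)

(* Defs.v *)
From HB Require Import structures.
From mathcomp Require Import all_boot all_order all_algebra.
From mathcomp Require Import all_classical all_reals all_analysis.

(* Main.v *)
Require Import Defs.
From HB Require Import structures.
From mathcomp Require Import all_boot all_order all_algebra.
From mathcomp Require Import all_classical all_reals all_analysis.
From mathcomp Require Import ring lra zify.
Import Order.TTheory GRing.Theory Num.Theory.
Import numFieldTopology.Exports.
Local Open Scope classical_set_scope.
Local Open Scope ring_scope.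

Section S.
Context {R : realType}.
Notation mu := (@lebesgue_measure R).

Lemma int_exp (c a : R) : 0 < c ->
  (\int[mu]_(x in `[a, +oo[) (expR (- (c * x)))%:E = (expR (- (c * a)) / c)%:E)%E.
Proof.
move=> c0.
have cE : continuous (fun z : R => expR (- (c * z))).
  move=> z; apply: continuous_comp; last exact: continuous_expR.
  by apply: (@continuousN _ R^o); apply: continuousM => //; exact: cst_continuous.
have cF : continuous (fun z : R => - expR (- (c * z)) / c).
  move=> z; apply: (@continuousM _ R^o (fun z => - expR (- (c * z))) (fun=> c^-1)); last exact: cst_continuous.
  by apply: (@continuousN _ R^o); exact: cE.
rewrite (@ge0_continuous_FTC2y _ _ (fun z => - expR (- (c * z)) / c) a 0).
- by rewrite -EFinB sub0r mulNr opprK.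
- by move=> x _; exact: expR_ge0.
- exact: continuous_subspaceT.
- rewrite -[0](mul0r c^-1) -oppr0; apply: cvgMl; apply: cvgN.
  apply: (cvg_comp (fun x => c * x) (fun z => expR (- z)) (G:=pinfty_nbhs R)); last exact: cvgr_expR.
  exact: gt0_cvgMry.
- by move=> x _; exact: ex_derive.
- by apply/cvg_at_right_filter; exact: cF.
- move=> z _.
  rewrite derive1E derive_val scaler0 add0r mulrN opprK.
  have sE (x y : R) : x *: y = x * y by [].
  by rewrite !sE mulr1 mulrCA mulVf ?gt_eqF// mulr1.

Qed.

Lemma le_integral_nm d (T : measurableType d) (nu : {measure set T -> \bar R}) (D : set T) (f g : T -> \bar R) :
  (forall x, D x -> (0 <= f x)%E) -> (forall x, D x -> (f x <= g x)%E) ->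
  (\int[nu]_(x in D) f x <= \int[nu]_(x in D) g x)%E.
Proof.
move=> f0 fg.
have g0 : forall x, D x -> (0 <= g x)%E by move=> x Dx; exact: le_trans (f0 x Dx) (fg x Dx).
rewrite (ge0_integralE _ f0) (ge0_integralE _ g0) /=.
apply: ereal_sup_le => _ [h hf <-]; exists h => // x.
apply: le_trans (hf x) _.
rewrite /patch; case: ifPn => // /set_mem Dx; exact: fg.
Qed.
End S.


Theorem lemmaC4 (R : realType) (sigma : nat -> R) (gamma : R)
  (hsigma : (fun k : nat => sigma k / ln (k%:R : R)) @ \oo --> +oo)
  (hgamma : 0 < gamma) :
  (fun k : nat => ((k%:R : R)%:E *
     \int[@lebesgue_measure R]_(m in `[sigma k, +oo[)
        (expR (- (2 * m * (gamma - Num.sqrt (ln (k%:R : R) / m)) ^+ 2)))%:E)%E)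
  @ \oo --> 0%E.
Proof.
set c := gamma ^+ 2 / 2.
have g20 : 0 < gamma ^+ 2 by exact: exprn_gt0.
have c0 : 0 < c by rewrite /c divr_gt0.
have /cvgryPge hs := hsigma.
apply: (@squeeze_cvge _ _ _ _ (fun=> 0%E) _ (fun k => (2 * c^-1 * harmonic k)%:E)); last 2 first.
- exact: cvg_cst.
- apply: cvg_EFin; first by apply: nearW.
  rewrite -[0](mulr0 (2 * c^-1)); apply: cvgMr; exact: cvg_harmonic.
near=> k.
have k2 : (2 <= k)%N by near: k; exists 2%N.
have hk : 4 / gamma ^+ 2 <= sigma k / ln (k%:R : R) by near: k; exact: hs.
set L := ln (k%:R : R).
have L0 : 0 < L by apply: ln_gt0; rewrite ltr1n.
have sL : 4 * L <= sigma k * gamma ^+ 2.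
  by move: hk; rewrite ler_pdivlMr // => hk; rewrite -ler_pdivrMr // mulrAC.
have s0 : 0 < sigma k.
  by rewrite -(pmulr_lgt0 _ g20); apply: lt_le_trans sL; rewrite mulr_gt0.

have k0 : 0 < (k%:R : R) by rewrite ltr0n; move: k2; case: (k).  
apply/andP; split.
  apply: mule_ge0; first by rewrite lee_fin ler0n.
  by apply: integral_ge0 => m _; rewrite lee_fin expR_ge0.
apply: (@le_trans _ _ ((k%:R : R)%:E * (expR (- (c * sigma k)) / c)%:E)%E).
  apply: lee_wpmul2l; first by rewrite lee_fin ler0n.
  rewrite -int_exp //; apply: le_integral_nm.
    by move=> m _; rewrite lee_fin expR_ge0.
  move=> m; rewrite /= in_itv /= andbT => hm.
  rewrite lee_fin ler_expR lerN2.
  have m0 : 0 < m by apply: lt_le_trans hm.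
  set s := Num.sqrt (L / m).
  have sge0 : 0 <= s by exact: sqrtr_ge0.
  have ss : s ^+ 2 = L / m by rewrite sqr_sqrtr // divr_ge0 // ltW.
  have Lm : L / m <= gamma ^+ 2 / 4.
    rewrite ler_pdivrMr // mulrAC ler_pdivlMr //.
    rewrite mulrC; apply: le_trans sL _; rewrite mulrC; apply: ler_wpM2l; first exact: ltW.
    exact: hm.
  have sg : s <= gamma / 2 by nra.
  have sq : gamma ^+ 2 / 4 <= (gamma - s) ^+ 2 by nra.
  rewrite /c; nra.
rewrite -EFinM lee_fin /=.
have kE : (k%:R : R) = expR L by rewrite lnK // posrE.
have hce : c * sigma k = sigma k * gamma ^+ 2 / 2 by rewrite /c; ring.
have h1 : (k%:R : R) * expR (- (c * sigma k)) <= (k%:R)^-1.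
  rewrite {1}kE -expRD kE -expRN ler_expR; lra.
have h2 : (k%:R : R)^-1 <= 2 * (k.+1%:R)^-1.
  have -> : 2 * (k.+1%:R : R)^-1 = (k.+1%:R / 2)^-1 by rewrite invfM invrK mulrC.
  rewrite lef_pV2 ?posrE ?divr_gt0 ?ltr0n //; last by lia.
  have : (2 : R) <= k%:R by rewrite ler_nat.
  rewrite -[k.+1]addn1 natrD; lra.
have -> : 2 / c / (k.+1%:R : R) = c^-1 * (2 * (k.+1%:R)^-1) by ring.
have -> : (k%:R : R) * (expR (- (c * sigma k)) / c) = c^-1 * ((k%:R : R) * expR (- (c * sigma k))) by ring.
apply: ler_wpM2l; first by rewrite invr_ge0 ltW.
exact: le_trans h1 h2.
Unshelve. all: by end_near.
Qed.
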